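(* Let $\Gamma$ be a countable group and let $\mathcal P\subseteq\mathrm{Sub}(\Gamma)$ be a nonempty $\Gamma$-invariant $G_\delta$ subset (hence Polish for the induced topology). Assume that $\mathcal{HT}(\Gamma)\cap\mathcal P$ is dense in $\mathcal P$ and that the conjugation action of $\Gamma$ on $\mathcal P$ is topologically transitive. Then the action of $\Gamma$ on $\mathcal P$ is highly topologically transitive.
   Context: $\mathrm{Sub}(\Gamma)$ is the set of subgroups of $\Gamma$ with the topology generated by the clopen sets $\{\Lambda:\mathcal I\subseteq\Lambda,\ \mathcal O\cap\Lambda=\emptyset\}$ with $\mathcal I,\mathcal O\subseteq\Gamma$ finite; $\Gamma$ acts on it by conjugation, $\Lambda\cdot\gamma=\gamma^{-1}\Lambda\gamma$. $\mathcal{HT}(\Gamma)$ is the set of infinite index subgroups $\Lambda$ such that the right-multiplication action $\Lambda\backslash\Gamma\curvearrowleft\Gamma$ is highly transitive (for all $d$, all pairwise distinct $x_1,..,x_d$ and pairwise distinct $y_1,..,y_d$ there is $\gamma$ with $x_i\gamma=y_i$). For an action by homeomorphisms on a Hausdorff space $X$: it is topologically transitive if for all nonempty open $U,V$ there is $\gamma$ with $U\gamma\cap V\ne\emptyset$; for $d\ge1$ it is $d$-topologically transitive if the diagonal action on $X^{(d)}=\{(x_1,\dots,x_d)\in X^d: x_i\neq x_j \text{ for } i\neq j\}$ (with the topology induced from $X^d$) is topologically transitive; if $X$ is infinite it is highly topologically transitive if it is $d$-topologically transitive for all $d\ge1$. *)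

(* Defs.v *)
From Stdlib Require Import List.
From mathcomp Require Import all_boot.
Set Implicit Arguments.
Unset Strict Implicit.

Section Defs.
Variables (T : Type) (mul : T -> T -> T) (inv : T -> T) (one : T).

Record is_group : Prop := IsGroup {
  mulA : forall x y z, mul x (mul y z) = mul (mul x y) z;
  mul1g : forall x, mul one x = x;
  mulg1 : forall x, mul x one = x;
  mulVg : forall x, mul (inv x) x = one;
  mulgV : forall x, mul x (inv x) = one }.

Definition countable_type : Prop := exists f : T -> nat, forall x y, f x = f y -> x = y.

Definition is_subgroup (L : T -> Prop) : Prop :=
  L one /\ (forall x y, L x -> L y -> L (mul x y)) /\ (forall x, L x -> L (inv x)).

(* conjugation action Lambda . g = g^-1 Lambda g *)
Definition conj_act (L : T -> Prop) (g : T) : T -> Prop :=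
  fun x => L (mul (mul g x) (inv g)).

Definition basic (I O : list T) (L : T -> Prop) : Prop :=
  (forall x, In x I -> L x) /\ (forall x, In x O -> ~ L x).

Definition open_Sub (W : (T -> Prop) -> Prop) : Prop :=
  (forall L, W L -> is_subgroup L) /\
  (forall L, W L -> exists I O, basic I O L /\
      (forall K, is_subgroup K -> basic I O K -> W K)).

Definition relopen (P U : (T -> Prop) -> Prop) : Prop :=
  exists W, open_Sub W /\ (forall L, U L <-> P L /\ W L).

Definition Gdelta (P : (T -> Prop) -> Prop) : Prop :=
  exists W : nat -> (T -> Prop) -> Prop, (forall n, open_Sub (W n)) /\
    (forall L, P L <-> is_subgroup L /\ forall n, W n L).

Definition conj_invariant (P : (T -> Prop) -> Prop) : Prop :=
  forall L g, P L -> P (conj_act L g).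

(* HT(Gamma): right cosets L x, L y coincide iff x y^-1 ∈ L *)
Definition infinite_index (L : T -> Prop) : Prop :=
  ~ exists reps : list T, forall g, exists h, In h reps /\ L (mul g (inv h)).

Definition coset_action_highly_transitive (L : T -> Prop) : Prop :=
  forall (d : nat) (x y : 'I_d -> T),
    (forall i j, i <> j -> ~ L (mul (x i) (inv (x j)))) ->
    (forall i j, i <> j -> ~ L (mul (y i) (inv (y j)))) ->
    exists g, forall i, L (mul (mul (x i) g) (inv (y i))).

Definition HT (L : T -> Prop) : Prop :=
  is_subgroup L /\ infinite_index L /\ coset_action_highly_transitive L.

Definition dense_in (A P : (T -> Prop) -> Prop) : Prop :=
  forall U, relopen P U -> (exists L, U L) -> exists L, U L /\ A L.

Definition top_transitive (X : Type) (opn : (X -> Prop) -> Prop) (act : X -> T -> X) : Prop :=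
  forall U V, opn U -> opn V -> (exists x, U x) -> (exists y, V y) ->
    exists g x, U x /\ V (act x g).

(* X^(d) for X = P, with topology induced from the product topology *)
Definition distinct_tuple (P : (T -> Prop) -> Prop) (d : nat) (x : 'I_d -> (T -> Prop)) : Prop :=
  (forall i, P (x i)) /\ (forall i j, i <> j -> x i <> x j).

Definition open_tuple (P : (T -> Prop) -> Prop) (d : nat)
    (W : ('I_d -> (T -> Prop)) -> Prop) : Prop :=
  (forall x, W x -> distinct_tuple P x) /\
  (forall x, W x -> exists U : 'I_d -> (T -> Prop) -> Prop,
      (forall i, relopen P (U i)) /\ (forall i, U i (x i)) /\
      (forall y, distinct_tuple P y -> (forall i, U i (y i)) -> W y)).

Definition diag_act (d : nat) (x : 'I_d -> (T -> Prop)) (g : T) : 'I_d -> (T -> Prop) :=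
  fun i => conj_act (x i) g.

Definition d_top_transitive (P : (T -> Prop) -> Prop) (d : nat) : Prop :=
  top_transitive (@open_tuple P d) (@diag_act d).

Definition infinite_set (P : (T -> Prop) -> Prop) : Prop :=
  ~ exists l : list (T -> Prop), forall L, P L -> In L l.

Definition highly_top_transitive (P : (T -> Prop) -> Prop) : Prop :=
  infinite_set P /\ forall d, 1 <= d -> d_top_transitive P d.

End Defs.

(* Main.v *)
Require Import Defs.
From Stdlib Require Import List Classical Lia FunctionalExtensionality PropExtensionality.
From mathcomp Require Import all_boot.
Set Implicit Arguments. Unset Strict Implicit.

Lemma g_invM T (mul : T -> T -> T) inv one (HG : is_group mul inv one) a b :
  inv (mul a b) = mul (inv b) (inv a).
Proof.
case: HG => A l1 r1 lV rV.
have H : mul (mul a b) (mul (inv b) (inv a)) = one.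
  by rewrite -A (A b) rV l1 rV.
have := f_equal (mul (inv (mul a b))) H.
by rewrite A lV l1 r1; move=> <-.
Qed.

Lemma g_invK T (mul : T -> T -> T) inv one (HG : is_group mul inv one) a :
  inv (inv a) = a.
Proof.
case: HG => A l1 r1 lV rV.
have := f_equal (mul (inv (inv a))) (lV a).
by rewrite A lV l1 r1; move=> <-.
Qed.

Lemma sub_conj_iff T (mul : T -> T -> T) inv one (HG : is_group mul inv one) L h y :
  is_subgroup mul inv one L -> L h -> (L (mul (mul h y) (inv h)) <-> L y).
Proof.
move=> [L1 [LM LI]] Lh; split => H.
- have := LM _ _ (LM _ _ (LI _ Lh) H) Lh.
  case: HG => A l1 r1 lV rV.
  by rewrite !A lV l1 -A lV r1.
- exact: LM _ _ (LM _ _ Lh H) (LI _ Lh).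
Qed.

Lemma coset_conj_iff T (mul : T -> T -> T) inv one (HG : is_group mul inv one) L a b x :
  is_subgroup mul inv one L -> L (mul a (inv b)) ->
  (L (mul (mul a x) (inv a)) <-> L (mul (mul b x) (inv b))).
Proof.
move=> HL Hab.
rewrite -(sub_conj_iff HG (mul (mul b x) (inv b)) HL Hab).
have -> : mul (mul (mul a (inv b)) (mul (mul b x) (inv b))) (inv (mul a (inv b)))
   = mul (mul a x) (inv a).
  rewrite (g_invM HG) (g_invK HG).
  case: HG => A l1 r1 lV rV.
  by rewrite !A -(A a) lV r1 -(A _ (inv b) b) lV r1.
done.
Qed.

Lemma conj_conj_eq T (mul : T -> T -> T) inv one (HG : is_group mul inv one) a g x :
  mul (mul a (mul (mul g x) (inv g))) (inv a) = mul (mul (mul a g) x) (inv (mul a g)).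
Proof.
rewrite (g_invM HG). case: HG => A l1 r1 lV rV. by rewrite !A.
Qed.

Definition op T (P U : (T -> Prop) -> Prop) :=
  forall L, U L -> P L /\ exists I O, basic I O L /\ forall K, P K -> basic I O K -> U K.

Lemma relopen_op T (mul : T -> T -> T) inv one P U :
  (forall L, P L -> is_subgroup mul inv one L) -> relopen mul inv one P U -> op P U.
Proof.
move=> HPs [W [[WS Wo] HU]] L /HU [PL WL]; split => //.
have [I [O [B HB]]] := Wo L WL.
exists I, O; split => // K PK BK; apply/HU; split => //.
exact: HB (HPs _ PK) BK.
Qed.

Lemma op_relopen T (mul : T -> T -> T) inv one P U :
  (forall L, P L -> is_subgroup mul inv one L) -> op P U -> relopen mul inv one P U.
Proof.
move=> HPs HU.
exists (fun K => is_subgroup mul inv one K /\ exists L, U L /\ exists I O,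
   basic I O L /\ basic I O K /\ (forall K', P K' -> basic I O K' -> U K')).
split; first split.
- by move=> L [].
- move=> K [SK [L [UL [I [O [BL [BK H]]]]]]].
  exists I, O; split => // K' SK' BK'; split => //.
  by exists L; split => //; exists I, O.
- move=> L; split.
  + move=> UL; have [PL [I [O [B H]]]] := HU L UL.
    split => //; split; first exact: HPs.
    by exists L; split => //; exists I, O.
  + move=> [PL [_ [L' [_ [I [O [_ [BK H]]]]]]]]; exact: H.
Qed.

Lemma basic_app T (I1 O1 I2 O2 : list T) L :
  basic I1 O1 L -> basic I2 O2 L -> basic (I1 ++ I2) (O1 ++ O2) L.
Proof.
move=> [a b] [c d]; split => x Hx; case: (in_app_or _ _ _ Hx); auto.
Qed.

Lemma basic_appl T (I1 O1 I2 O2 : list T) L :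
  basic (I1 ++ I2) (O1 ++ O2) L -> basic I1 O1 L /\ basic I2 O2 L.
Proof.
move=> [a b]; split; split => x H; (apply: a || apply: b); apply: in_or_app; auto.
Qed.

Lemma op_and T (P U V : (T -> Prop) -> Prop) :
  op P U -> op P V -> op P (fun L => U L /\ V L).
Proof.
move=> HU HV L [UL VL].
have [PL [I1 [O1 [B1 H1]]]] := HU L UL.
have [_ [I2 [O2 [B2 H2]]]] := HV L VL.
split => //; exists (I1 ++ I2), (O1 ++ O2); split; first exact: basic_app.
move=> K PK /basic_appl [] ? ?; split; auto.
Qed.

Lemma op_P T (P : (T -> Prop) -> Prop) : op P P.
Proof. by move=> L PL; split => //; exists nil, nil. Qed.

Lemma op_ext T (P U : (T -> Prop) -> Prop) L K :
  op P U -> U L -> P K -> (forall x, L x <-> K x) -> U K.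
Proof.
move=> HU UL PK E; have [_ [I [O [[B1 B2] H]]]] := HU L UL.
apply: H => //; split => x Hx; [apply/E; auto | rewrite -E; auto].
Qed.

Lemma op_conj T (mul : T -> T -> T) inv (P U : (T -> Prop) -> Prop) g :
  conj_invariant mul inv P -> op P U ->
  op P (fun L => P L /\ U (conj_act mul inv L g)).
Proof.
move=> HPi HU L [PL UL]; split => //.
have [_ [I [O [[B1 B2] H]]]] := HU _ UL.
pose f x := mul (mul g x) (inv g).
exists (List.map f I), (List.map f O); split.
- split => y /in_map_iff [x [<- Hx]]; [exact: B1 | exact: B2].
- move=> K PK [C1 C2]; split => //; apply: H; first exact: HPi.
  split => x Hx; [apply: C1 | apply: C2]; apply/in_map_iff; exists x; auto.
Qed.

Lemma op_sep T (P : (T -> Prop) -> Prop) (S : list T) (x : T -> Prop) :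
  op P (fun L => P L /\ forall s, In s S -> (L s <-> x s)).
Proof.
move=> L [PL HL]; split => //.
have [I [O HIO]] : exists I O, forall K : T -> Prop,
    basic I O K <-> forall s, In s S -> (K s <-> x s).
  elim: S {HL} => [|s S [I [O IH]]].
    by exists nil, nil => K; split => // _; split.
  case: (classic (x s)) => xs.
  - exists (s :: I), O => K; split.
    + move=> [B1 B2] t [<-|tS]; first by split; auto => _; apply: B1; left.
      have : basic I O K by split => // y yI; apply: B1; right.
      by move/IH; apply.
    + move=> H; have [B1 B2] : basic I O K by apply/IH => t tS; apply: H; right.
      split => // y [<-|yI]; last exact: B1.
      by apply/(H s (or_introl erefl)).
  - exists I, (s :: O) => K; split.
    + move=> [B1 B2] t [<-|tS]; first by split => // Ks; exfalso; apply: (B2 s) => //; left.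
      have : basic I O K by split => // y yI; apply: B2; right.
      by move/IH; apply.
    + move=> H; have [B1 B2] : basic I O K by apply/IH => t tS; apply: H; right.
      split => // y [<-|yI]; last exact: B2.
      by move/(H s (or_introl erefl)).
exists I, O; split; first by apply/HIO.
by move=> K PK /HIO.
Qed.

Lemma key T (mul : T -> T -> T) inv (one : T) (P : (T -> Prop) -> Prop)
  (HPi : conj_invariant mul inv P)
  (TT : forall U V, op P U -> op P V -> (exists x, U x) -> (exists y, V y) ->
        exists g x, U x /\ V (conj_act mul inv x g))
  (F : nat -> (T -> Prop) -> Prop) (HF : forall k, op P (F k))
  (HFn : forall k, exists L, F k L) (n : nat) :
  exists A, op P A /\ (exists L, A L) /\
    forall L, A L -> exists ga : nat -> T, forall k, k < n -> F k (conj_act mul inv L (ga k)).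
Proof.
elim: n => [|n [A [HA [[L0 AL0] HAg]]]].
  have [L FL] := HFn 0.
  have [PL _] := HF 0 L FL.
  exists P; split; first exact: op_P.
  split; first by exists L.
  by move=> L1 _; exists (fun _ => one).
have [g [L [AL FL]]] := TT A (F n) HA (HF n) (ex_intro _ _ AL0) (HFn n).
have PL := (HA L AL).1.
exists (fun K => A K /\ (P K /\ F n (conj_act mul inv K g))); split.
  by apply: op_and => //; apply: op_conj.
split; first by exists L.
move=> K [AK [PK FK]]; have [ga Hga] := HAg K AK.
exists (fun k => if k == n then g else ga k) => k; rewrite ltnS leq_eqVlt.
case: eqP => [->|_] //= kn; exact: Hga.
Qed.

Lemma notL_sym T (mul : T -> T -> T) inv one (HG : is_group mul inv one) L a b :
  is_subgroup mul inv one L -> ~ L (mul a (inv b)) -> ~ L (mul b (inv a)).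
Proof.
move=> [_ [_ LI]] H1 H2; apply: H1.
have := LI _ H2; by rewrite (g_invM HG) (g_invK HG).
Qed.

Lemma ht_conj_neq T (mul : T -> T -> T) inv one (HG : is_group mul inv one) L a b :
  HT mul inv one L -> ~ L (mul a (inv b)) ->
  (forall x, L (mul (mul a x) (inv a)) <-> L (mul (mul b x) (inv b))) -> False.
Proof.
move=> [HL [Hinf Hht]] Hab E.
have [c [Hca Hcb]] : exists c, ~ L (mul c (inv a)) /\ ~ L (mul c (inv b)).
  apply: NNPP => N; apply: Hinf; exists (a :: b :: nil) => g.
  case: (classic (L (mul g (inv a)))) => Ha; first by exists a; split => //; left.
  case: (classic (L (mul g (inv b)))) => Hb; first by exists b; split => //; right; left.
  by exfalso; apply: N; exists g.
pose x := fun i : 'I_2 => if val i == 0 then a else b.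
pose y := fun i : 'I_2 => if val i == 0 then a else c.
have hx : forall i j, i <> j -> ~ L (mul (x i) (inv (x j))).
  move=> [[|[|i]] Hi] [[|[|j]] Hj] //= ij.
  + by exfalso; apply: ij; apply: val_inj.
  + exact: (notL_sym HG HL).
  + by exfalso; apply: ij; apply: val_inj.
have hy : forall i j, i <> j -> ~ L (mul (y i) (inv (y j))).
  move=> [[|[|i]] Hi] [[|[|j]] Hj] //= ij.
  + by exfalso; apply: ij; apply: val_inj.
  + exact: (notL_sym HG HL).
  + by exfalso; apply: ij; apply: val_inj.
have [g Hg] := Hht 2 x y hx hy.
have H0 := Hg (Ordinal (isT : 0 < 2)).
have H1 := Hg (Ordinal (isT : 1 < 2)).
rewrite /x /y /= in H0 H1.
have /E Hb := H0.
apply: (notL_sym HG HL Hcb).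
case: HL => [_ [LM LI]].
have := LM _ _ (LI _ Hb) H1.
rewrite (g_invM HG) (g_invK HG) (g_invM HG).
case: HG => A l1 r1 lV rV.
by rewrite !A -(A _ (inv b) b) lV r1 -(A _ (inv g) g) lV r1.
Qed.

Lemma P_infinite T (mul : T -> T -> T) inv one (HG : is_group mul inv one) P L :
  conj_invariant mul inv P -> HT mul inv one L -> P L -> infinite_set P.
Proof.
move=> HPi HTL PL [l Hl].
have Hinf := (proj1 (proj2 HTL)).
have claim : forall n, exists reps, length reps = n /\ NoDup (List.map (conj_act mul inv L) reps).
  elim=> [|n [reps [Hlen Hnd]]]; first by exists nil; split => //; constructor.
  have [g Hg] : exists g, forall h, In h reps -> ~ L (mul g (inv h)).
    apply: NNPP => N; apply: Hinf; exists reps => g.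
    apply: NNPP => N2; apply: N; exists g => h hr Lh; apply: N2; by exists h.
  exists (g :: reps); split; first by rewrite /= Hlen.
  constructor => //.
  move/in_map_iff=> [h [Eh hr]].
  apply: (ht_conj_neq HG HTL (Hg h hr)) => x.
  by rewrite -/(conj_act mul inv L g x) -Eh.
have [reps [Hlen Hnd]] := claim (length l).+1.
have := NoDup_incl_length Hnd.
rewrite length_map Hlen.
have : incl (List.map (conj_act mul inv L) reps) l.
  move=> y /in_map_iff [h [<- _]]; exact/Hl/HPi.
move=> H /(_ l H); lia.
Qed.

Lemma mem_In (A : eqType) (x : A) s : x \in s -> In x s.
Proof.
elim: s => //= a s IH; rewrite in_cons => /orP [/eqP ->|/IH]; auto.
Qed.

Lemma sep_list T d (z : 'I_d -> T -> Prop) : (forall i j, i <> j -> z i <> z j) ->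
  exists S : list T, forall i j, i <> j -> exists t, In t S /\ ~ (z i t <-> z j t).
Proof.
move=> Hz.
have Hp : forall p : 'I_d * 'I_d, exists S : list T,
    p.1 <> p.2 -> exists t, In t S /\ ~ (z p.1 t <-> z p.2 t).
  move=> [i j] /=; case: (classic (i = j)) => [-> | ij]; first by exists nil.
  have [t Ht] : exists t, ~ (z i t <-> z j t).
    apply: NNPP => N; apply: (Hz _ _ ij); apply: functional_extensionality => t.
    apply: propositional_extensionality; apply: NNPP => N2; apply: N; by exists t.
  by exists (t :: nil) => _; exists t; split => //; left.
have Hl : forall ps : seq ('I_d * 'I_d), exists S : list T, forall p, In p ps ->
    p.1 <> p.2 -> exists t, In t S /\ ~ (z p.1 t <-> z p.2 t).
  elim => [|p ps [S HS]]; first by exists nil.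
  have [S1 H1] := Hp p; exists (S1 ++ S) => q Hq qn; case: Hq => [E|qps].
  - subst q; have [t [tS Ht]] := H1 qn; by exists t; split => //; apply: in_or_app; left.
  - have [t [tS Ht]] := HS q qps qn; by exists t; split => //; apply: in_or_app; right.
have [S HS] := Hl (enum {: 'I_d * 'I_d}).
exists S => i j ij; apply: (HS (i, j)) => //; apply: mem_In; rewrite mem_enum //.
Qed.

Lemma dtt T (mul : T -> T -> T) inv one (HG : is_group mul inv one) P
  (HPsub : forall L, P L -> is_subgroup mul inv one L)
  (HPinv : conj_invariant mul inv P)
  (TT : forall U V, op P U -> op P V -> (exists x, U x) -> (exists y, V y) ->
        exists g x, U x /\ V (conj_act mul inv x g))
  (DN : forall U, op P U -> (exists L, U L) -> exists L, U L /\ HT mul inv one L)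
  (n : nat) : d_top_transitive mul inv one P n.+1.
Proof.
move=> W1 W2 [W1d W1o] [W2d W2o] [x Wx] [y Wy].
have [U [HUo [HUx HUW]]] := W1o x Wx.
have [V [HVo [HVy HVW]]] := W2o y Wy.
have [xP xd] := W1d x Wx.
have [yP yd] := W2d y Wy.
have [Sx HSx] := sep_list xd.
have [Sy HSy] := sep_list yd.
pose U' i L := U i L /\ (P L /\ forall s, In s Sx -> (L s <-> x i s)).
pose V' i L := V i L /\ (P L /\ forall s, In s Sy -> (L s <-> y i s)).
have HU'o : forall i, op P (U' i).
  by move=> i; apply: op_and; [exact: relopen_op HPsub (HUo i) | exact: op_sep].
have HV'o : forall i, op P (V' i).
  by move=> i; apply: op_and; [exact: relopen_op HPsub (HVo i) | exact: op_sep].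
pose F k := if k < n.+1 then U' (inord k) else V' (inord (k - n.+1)).
have HF : forall k, op P (F k) by move=> k; rewrite /F; case: ifP.
have HFn : forall k, exists L, F k L.
  move=> k; rewrite /F; case: ifP => _.
  - by exists (x (inord k)); split; auto; split; auto.
  - by exists (y (inord (k - n.+1))); split; auto; split; auto.
have [A [HA [[L0 AL0] HAg]]] := key one HPinv TT HF HFn (n.+1 + n.+1).
have [La [ALa HTa]] := DN A HA (ex_intro _ _ AL0).
have [ga Hga] := HAg La ALa.
have PLa := (HA La ALa).1.
have HLa := HPsub La PLa.
have HU1 : forall i : 'I_n.+1, U' i (conj_act mul inv La (ga i)).
  move=> i; have := Hga i (leq_trans (ltn_ord i) (leq_addr _ _)).
  by rewrite /F ltn_ord inord_val.
have HV1 : forall i : 'I_n.+1, V' i (conj_act mul inv La (ga (n.+1 + i))).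
  move=> i; have := Hga (n.+1 + i); rewrite ltn_add2l ltn_ord => /(_ isT).
  by rewrite /F ltnNge leq_addr /= addKn inord_val.
have sepU : forall i j, i <> j -> forall K1 K2, U' i K1 -> U' j K2 ->
    (forall t, K1 t <-> K2 t) -> False.
  move=> i j ij K1 K2 [_ [_ H1]] [_ [_ H2]] E.
  have [t [tS Ht]] := HSx i j ij.
  have := H1 t tS; have := H2 t tS; have := E t; tauto.
have sepV : forall i j, i <> j -> forall K1 K2, V' i K1 -> V' j K2 ->
    (forall t, K1 t <-> K2 t) -> False.
  move=> i j ij K1 K2 [_ [_ H1]] [_ [_ H2]] E.
  have [t [tS Ht]] := HSy i j ij.
  have := H1 t tS; have := H2 t tS; have := E t; tauto.
have dc : forall i j : 'I_n.+1, i <> j -> ~ La (mul (ga i) (inv (ga j))).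
  move=> i j ij Hij; apply: (sepU i j ij _ _ (HU1 i) (HU1 j)) => t.
  rewrite /conj_act; exact: (coset_conj_iff HG t HLa Hij).
have dd : forall i j : 'I_n.+1, i <> j ->
    ~ La (mul (ga (n.+1 + i)) (inv (ga (n.+1 + j)))).
  move=> i j ij Hij; apply: (sepV i j ij _ _ (HV1 i) (HV1 j)) => t.
  rewrite /conj_act; exact: (coset_conj_iff HG t HLa Hij).
have [g Hg] := HTa.2.2 n.+1 (fun i => ga i) (fun i => ga (n.+1 + i)) dc dd.
exists g, (fun i => conj_act mul inv La (ga i)); split.
- apply: HUW.
  + split; first by move=> i; apply: (HPinv).
    move=> i j ij E; apply: (sepU i j ij _ _ (HU1 i) (HU1 j)) => t; by rewrite E.
  + move=> i; exact: (HU1 i).1.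
- have E2 : forall (i : 'I_n.+1) (t : T), diag_act mul inv (fun i => conj_act mul inv La (ga i)) g i t
      <-> conj_act mul inv La (ga (n.+1 + i)) t.
    intros i0 t0; rewrite /diag_act /conj_act /=; rewrite (conj_conj_eq HG).
    exact: (coset_conj_iff HG t0 HLa (Hg i0)).
  have Pd : forall i : 'I_n.+1, P (diag_act mul inv (fun i => conj_act mul inv La (ga i)) g i).
    by move=> i; rewrite /diag_act /=; apply: (HPinv); apply: (HPinv).
  apply: HVW.
  + split; first exact Pd.
    move=> i j ij E; apply: (sepV i j ij _ _ (HV1 i) (HV1 j)) => t.
    have := E2 i t; have := E2 j t; rewrite E; tauto.
  + move=> i; apply: (op_ext (relopen_op HPsub (HVo i)) (HV1 i).1 (Pd i)) => t.
    have := E2 i t; tauto.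
Qed.

Theorem theoremD (T : Type) (mul : T -> T -> T) (inv : T -> T) (one : T)
  (HG : is_group mul inv one) (Hc : countable_type T)
  (P : (T -> Prop) -> Prop)
  (HPsub : forall L, P L -> is_subgroup mul inv one L)
  (HPne : exists L, P L)
  (HPinv : conj_invariant mul inv P)
  (HPG : Gdelta mul inv one P)
  (Hdense : dense_in mul inv one (HT mul inv one) P)
  (Htt : top_transitive (relopen mul inv one P) (conj_act mul inv)) :
  highly_top_transitive mul inv one P.
Proof.
have TT : forall U V, op P U -> op P V -> (exists x, U x) -> (exists y, V y) ->
    exists g x, U x /\ V (conj_act mul inv x g).
  move=> U V HU HV; apply: Htt; exact: op_relopen HPsub _.
have DN : forall U, op P U -> (exists L, U L) -> exists L, U L /\ HT mul inv one L.
  move=> U HU; apply: Hdense; exact: op_relopen HPsub _.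
split.
- have [L [PL HTL]] := DN P (@op_P _ P) HPne.
  exact: (@P_infinite T mul inv one HG P L HPinv HTL PL).
- case=> [//|n] _; exact: (@dtt T mul inv one HG P HPsub HPinv TT DN n).
Qed.
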